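(* Assume $\mathfrak C_R \subseteq \mathfrak m^2$, and let $S$, $s$, $b_1<\cdots<b_s$ and $i_0$ be as in the context. Then the Herzog–Kunz sequence $\widetilde a_1 < \cdots < \widetilde a_{n+s}$ of $S$ satisfies $\widetilde a_j = a_j$ for $j \le i_0$ and $$\{\widetilde a_{i_0+1}, \ldots, \widetilde a_{n+s}\} = \{a_{i_0+1}, \ldots, a_n, b_1, \ldots, b_s\},$$ and $S = k[[\widetilde x_1, \ldots, \widetilde x_{n+s}]]$ with Herzog–Kunz generators $\widetilde x_j = x_j$ for $j \le i_0$ and $\widetilde x_j = t^{\widetilde a_j}$ for $j > i_0$.
   Context: Let $k$ be an algebraically closed field of characteristic $0$ and let $(R,\mathfrak m)$ be a complete local noetherian domain of dimension $1$ containing $k$ with $R/\mathfrak m = k$; its normalization is $\overline R = k[[t]]$, $R\subseteq k[[t]]$ finite birational. Let $v$ be the $t$-adic valuation; for $A \subseteq k((t))$ let $v(A)=\{v(f): f\in A\setminus\{0\}\}$, and $V(T)=v(T)$ for a ring $T$. The conductor is $\mathfrak C_R=\{x\in\overline R: x\overline R\subseteq R\} = t^{c_R}\overline R$. For any such ring $T$ (with maximal ideal $\mathfrak m_T$), its Herzog–Kunz sequence is $v(\mathfrak m_T)\setminus v(\mathfrak m_T^2)$ listed increasingly, and Herzog–Kunz generators are elements of $T$ having exactly these valuations (they generate $T$ as $k[[\cdot]]$, the image of a power series ring). Let $a_1<\cdots<a_n$ be the Herzog–Kunz sequence of $R$ and $x_1,\ldots,x_n$ Herzog–Kunz generators of $R$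 with $x_1 = t^{a_1}$. Let $S = R[\mathfrak C_R/x_1]$, let $b_1<\cdots<b_s$ be the elements of $\{c_R-a_1, c_R-a_1+1, \ldots, c_R-1\}$ not in $V(R)$ (so $s$ is the reduced type of $R$), and let $i_0 = \max\{i : a_i < c_R - a_1\}$. Known facts (used as given): $S = R[t^{b_1},\ldots,t^{b_s}]$ is again such a ring, $\mathfrak C_S = t^{c_R-a_1}\overline R$ so $c_S = c_R - a_1$, and $\mathrm{edim}(S) = n+s$. *)

(* Defs.v *)
From mathcomp Require Import all_boot all_order all_algebra.
Set Implicit Arguments. Unset Strict Implicit. Unset Printing Implicit Defensive.
Import GRing.Theory.
Local Open Scope ring_scope.

Section PS.
Variable k : fieldType.

(* k[[t]] : f n is the coefficient of t^n *)
Definition ps := nat -> k.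
Definition pset := ps -> Prop.
Definition ps0 : ps := fun _ => 0.

Definition ps_const (c : k) : ps := fun n => if n == 0%N then c else 0.
Definition ps_add (f g : ps) : ps := fun n => f n + g n.
Definition ps_mul (f g : ps) : ps := fun n => \sum_(i < n.+1) f i * g (n - i)%N.
Definition ps_pow (f : ps) (e : nat) : ps := iter e (ps_mul f) (ps_const 1).
Definition tpow (a : nat) : ps := fun n => if n == a then 1 else 0.

Definition is_val (f : ps) (n : nat) : Prop :=
  f n <> 0 /\ forall i, (i < n)%N -> f i = 0.
Definition vset (A : pset) : nat -> Prop :=
  fun n => exists f, A f /\ is_val f n.

Definition subalg (T : pset) : Prop :=
  (forall c, T (ps_const c)) /\
  (forall f g, T f -> T g -> T (ps_add f g)) /\
  (forall f g, T f -> T g -> T (ps_mul f g)).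

(* maximal ideal of T (T/m_T = k): elements of T with zero constant term *)
Definition maxid (T : pset) : pset := fun f => T f /\ f 0%N = 0.

Definition idsq (I : pset) : pset := fun f =>
  exists l : seq (ps * ps),
    (forall j, (j < size l)%N ->
       I (nth (ps0, ps0) l j).1 /\ I (nth (ps0, ps0) l j).2) /\
    forall n, f n = \sum_(p <- l) ps_mul p.1 p.2 n.

Definition conductor (T : pset) : pset :=
  fun x => forall y : ps, T (ps_mul x y).

Definition adjoin (R A : pset) : pset := fun f =>
  forall T : pset, subalg T -> (forall g, R g -> T g) -> (forall g, A g -> T g) -> T f.

Definition divset (C : pset) (x : ps) : pset := fun g => C (ps_mul x g).

Definition HKseq (T : pset) (a : seq nat) : Prop :=
  sorted ltn a /\
  forall n, n \in a <-> (vset (maxid T) n /\ ~ vset (idsq (maxid T)) n).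

Definition HKgens (T : pset) (a : seq nat) (x : seq ps) : Prop :=
  size x = size a /\
  forall j, (j < size a)%N -> T (nth ps0 x j) /\ is_val (nth ps0 x j) (nth 0%N a j).

Definition mono (x : seq ps) (alpha : {ffun 'I_(size x) -> nat}) : ps :=
  foldr (fun (i : 'I_(size x)) acc => ps_mul (ps_pow (nth ps0 x i) (alpha i)) acc)
        (ps_const 1) (enum 'I_(size x)).

(* f lies in k[[x_1,...,x_n]], the image of the power series ring
   k[[X_1..X_n]] under X_i |-> x_i (the x_i having zero constant term):
   f = sum_alpha c_alpha x^alpha, where the coefficient of t^N only involves
   the finitely many alpha with all alpha_i <= N. *)
Definition in_ps_image (x : seq ps) (f : ps) : Prop :=
  (forall i, (i < size x)%N -> nth ps0 x i 0%N = 0) /\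
  exists c : {ffun 'I_(size x) -> nat} -> k,
    forall N : nat,
      f N = \sum_(alpha : {ffun 'I_(size x) -> 'I_N.+1})
               c [ffun i => nat_of_ord (alpha i)] *
               @mono x [ffun i => nat_of_ord (alpha i)] N.

End PS.

(* Main.v *)
Require Import Defs.
From HB Require Import structures.
From mathcomp Require Import all_boot all_order all_algebra.
From mathcomp Require Import boolp zify ring.
Import GRing.Theory.
Local Open Scope ring_scope.

Set Implicit Arguments. Unset Strict Implicit. Unset Printing Implicit Defensive.

Definition psr (k : fieldType) := nat -> k.
HB.instance Definition _ (k:fieldType) := gen_eqMixin (psr k).
HB.instance Definition _ (k:fieldType) := gen_choiceMixin (psr k).

Lemma ps_addA (k : fieldType) : associative (@ps_add k).
Proof. by move=> f g h; apply: funext=> n; rewrite /ps_add addrA. Qed.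
Lemma ps_addC (k : fieldType) : commutative (@ps_add k).
Proof. by move=> f g; apply: funext=> n; rewrite /ps_add addrC. Qed.
Lemma ps_add0 (k : fieldType) : left_id (@ps0 k) (@ps_add k).
Proof. by move=> f; apply: funext=> n; rewrite /ps_add /ps0 add0r. Qed.
Lemma ps_addN (k : fieldType) : left_inverse (@ps0 k) (fun f n => - f n) (@ps_add k).
Proof. by move=> f; apply: funext=> n; rewrite /ps_add /ps0 addNr. Qed.

HB.instance Definition _ (k : fieldType) := GRing.isZmodule.Build (psr k)
  (@ps_addA k) (@ps_addC k) (@ps_add0 k) (@ps_addN k).

Definition trunc (k : fieldType) (f : ps k) n : {poly k} := \poly_(i < n.+1) f i.

Lemma coefM_agree (k : fieldType) (p p' q q' : {poly k}) n :
  (forall i, (i <= n)%N -> p`_i = p'`_i) -> (forall i, (i <= n)%N -> q`_i = q'`_i) ->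
  (p * q)`_n = (p' * q')`_n.
Proof.
move=> hp hq; rewrite !coefM; apply: eq_bigr=> [[i hi]] _ /=.
have hi' : (i <= n)%N by rewrite -ltnS.
by rewrite hp // hq // leq_subr.
Qed.

Lemma ps_mul_trunc (k : fieldType) (f g : ps k) n m : (m <= n)%N ->
  ps_mul f g m = (trunc f n * trunc g n)`_m.
Proof.
move=> hm; rewrite coefM /ps_mul; apply: eq_bigr=> [[i hi]] _ /=.
rewrite /trunc !coef_poly ifT; last by rewrite ltnS (leq_trans _ hm) // -ltnS.
by rewrite ifT // ltnS (leq_trans _ hm) // leq_subr.
Qed.

Lemma trunc_mul (k : fieldType) (f g : ps k) n i : (i <= n)%N ->
  (trunc (ps_mul f g) n)`_i = (trunc f n * trunc g n)`_i.
Proof. by move=> hi; rewrite /trunc coef_poly ltnS hi (ps_mul_trunc _ _ hi). Qed.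

Lemma trunc_coef (k : fieldType) (f : ps k) n i : (i <= n)%N -> (trunc f n)`_i = f i.
Proof. by move=> hi; rewrite /trunc coef_poly ltnS hi. Qed.

Lemma ps_mulA (k : fieldType) : associative (@ps_mul k).
Proof.
move=> f g h; apply: funext=> n.
rewrite (ps_mul_trunc _ _ (leqnn n)) (ps_mul_trunc (ps_mul f g) _ (leqnn n)).
rewrite (@coefM_agree _ _ (trunc f n) _ (trunc g n * trunc h n) n) //; last first.
  by move=> i hi; rewrite trunc_mul.
rewrite (@coefM_agree _ (trunc (ps_mul f g) n) (trunc f n * trunc g n) _ (trunc h n) n) //.
  by rewrite mulrA.
by move=> i hi; rewrite trunc_mul.
Qed.

Lemma ps_mulC (k : fieldType) : commutative (@ps_mul k).
Proof.
move=> f g; apply: funext=> n.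
by rewrite !(ps_mul_trunc _ _ (leqnn n)) mulrC.
Qed.

Lemma ps_mul1 (k : fieldType) : left_id (ps_const (1 : k)) (@ps_mul k).
Proof.
move=> f; apply: funext=> n; rewrite /ps_mul big_ord_recl /= /ps_const /= mul1r subn0.
by rewrite big1 ?addr0 // => i _; rewrite mul0r.
Qed.

Lemma ps_mulDl (k : fieldType) : left_distributive (@ps_mul k) (@ps_add k).
Proof.
move=> f g h; apply: funext=> n; rewrite /ps_mul /ps_add -big_split /=.
by apply: eq_bigr=> i _; rewrite mulrDl.
Qed.

Lemma ps_one_neq0 (k : fieldType) : (ps_const (1 : k) : psr k) != 0.
Proof.
apply/eqP=> /(congr1 (fun f : psr k => f 0%N)); rewrite /ps_const /=.
by move=> /eqP; rewrite oner_eq0.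
Qed.

HB.instance Definition _ (k : fieldType) := GRing.Zmodule_isComNzRing.Build (psr k)
  (@ps_mulA k) (@ps_mulC k) (@ps_mul1 k) (@ps_mulDl k) (@ps_one_neq0 k).




Section Basics.
Context {k : fieldType}.
Implicit Types (f g h : psr k).

Definition pc (c : k) : psr k := ps_const c.
Definition tp (j : nat) : psr k := tpow k j.

Lemma cD f g n : (f + g) n = f n + g n. Proof. by []. Qed.
Lemma cN f n : (- f) n = - f n. Proof. by []. Qed.
Lemma cB f g n : (f - g) n = f n - g n. Proof. by []. Qed.
Lemma c0 n : (0 : psr k) n = 0. Proof. by []. Qed.
Lemma cM f g n : (f * g) n = \sum_(i < n.+1) f i * g (n - i)%N. Proof. by []. Qed.
Lemma mulE f g : ps_mul f g = f * g. Proof. by []. Qed.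
Lemma addE f g : ps_add f g = f + g. Proof. by []. Qed.

Lemma c_sum (I : Type) (r : seq I) (P : pred I) (F : I -> psr k) n :
  (\sum_(i <- r | P i) F i) n = \sum_(i <- r | P i) F i n.
Proof. by elim/big_rec2: _ => // i y1 y2 _ <-. Qed.

Lemma constM c f n : (pc c * f) n = c * f n.
Proof.
rewrite cM big_ord_recl /= /pc /ps_const /= subn0 big1 ?addr0 // => i _.
by rewrite mul0r.
Qed.

Lemma const1 : pc (1 : k) = 1. Proof. by []. Qed.
Lemma constD a b : pc (a + b) = pc a + pc b :> psr k.
Proof. by apply: funext=> n; rewrite cD /pc /ps_const; case: eqP=> _; rewrite ?addr0. Qed.
Lemma constMM a b : pc (a * b) = pc a * pc b :> psr k.
Proof.
apply: funext=> n; rewrite constM /pc /ps_const; case: eqP=> _; rewrite ?mulr0 //.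
Qed.
Lemma const0 : pc 0 = 0 :> psr k.
Proof. by apply: funext=> n; rewrite /pc /ps_const; case: eqP. Qed.
Lemma constN a : pc (- a) = - pc a :> psr k.
Proof. by apply: funext=> n; rewrite cN /pc /ps_const; case: eqP; rewrite ?oppr0. Qed.

Definition hv (N : nat) f := forall i, (i < N)%N -> f i = 0.

Lemma hv0 f : hv 0 f. Proof. by []. Qed.
Lemma hvz N : hv N (0 : psr k). Proof. by []. Qed.
Lemma hvD N f g : hv N f -> hv N g -> hv N (f + g).
Proof. by move=> hf hg i hi; rewrite cD hf // hg // addr0. Qed.
Lemma hvN N f : hv N f -> hv N (- f).
Proof. by move=> hf i hi; rewrite cN hf // oppr0. Qed.
Lemma hvB N f g : hv N f -> hv N g -> hv N (f - g).
Proof. by move=> hf hg; apply: hvD=> //; apply: hvN. Qed.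
Lemma hvW M N f : (M <= N)%N -> hv N f -> hv M f.
Proof. by move=> hMN hf i hi; apply: hf; apply: leq_trans hMN. Qed.
Lemma hvM M N f g : hv M f -> hv N g -> hv (M + N) (f * g).
Proof.
move=> hf hg i hi; rewrite cM big1 // => [[j hj]] _ /=.
case: (ltnP j M)=> hjM; first by rewrite hf // mul0r.
by rewrite hg ?mulr0 //; lia.
Qed.
Lemma hvMl N f g : hv N g -> hv N (f * g).
Proof. by move=> hg; rewrite -(add0n N); apply: hvM. Qed.
Lemma hvMr N f g : hv N f -> hv N (f * g).
Proof. by move=> hf; rewrite mulrC; apply: hvMl. Qed.
Lemma hv_sum (I : Type) (r : seq I) (P : pred I) (F : I -> psr k) N :
  (forall i, P i -> hv N (F i)) -> hv N (\sum_(i <- r | P i) F i).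
Proof. by move=> H; elim/big_rec: _ => // i y Pi hy; apply: hvD=> //; apply: H. Qed.
Lemma hv_prod (I : Type) (r : seq I) (F : I -> psr k) (d : I -> nat) :
  (forall i, hv (d i) (F i)) -> hv (\sum_(i <- r) d i) (\prod_(i <- r) F i).
Proof.
move=> H; elim: r => [|i r IH]; first by rewrite !big_nil.
by rewrite !big_cons; apply: hvM.
Qed.
Lemma hvX N f e : hv N f -> hv (N * e) (f ^+ e).
Proof.
move=> hf; elim: e => [|e IH]; first by rewrite muln0.
by rewrite exprS mulnS; apply: hvM.
Qed.

Lemma hv_or_val f N : hv N f \/ exists2 v, (v < N)%N & is_val f v.
Proof.
elim: N => [|N [IH|[v hv1 hv2]]]; first by left.
- case: (eqVneq (f N) 0)=> hN.
    by left=> i; rewrite ltnS leq_eqVlt; case/orP=> [/eqP->|] //; apply: IH.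
  by right; exists N=> //; split; [apply/eqP|].
- by right; exists v=> //; apply: ltnW.
Qed.

Lemma is_val_hv f v : is_val f v -> hv v f. Proof. by case. Qed.
Lemma is_val_uniq f v w : is_val f v -> is_val f w -> v = w.
Proof.
move=> [h1 h2] [h3 h4]; case: (ltngtP v w)=> // H.
- by case: h1; apply: h4.
- by case: h3; apply: h2.
Qed.

Lemma tpowM_coef j f n : (tp j * f) n = if (j <= n)%N then f (n - j)%N else 0.
Proof.
rewrite cM; case: leqP=> hjn.
  rewrite (bigD1 (Ordinal (leq_trans hjn (leqnn n.+1) : (j < n.+1)%N))) //= /tp /tpow eqxx mul1r.
  by rewrite big1 ?addr0 // => [[i hi]] /= hne; rewrite ifN ?mul0r //; apply: contra hne=> /eqP h; apply/eqP/val_inj.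
by rewrite big1 // => [[i hi]] _ /=; rewrite /tp /tpow ifN ?mul0r // neq_ltn (leq_trans hi hjn).
Qed.

Lemma tpow_add i j : tp (i + j) = tp i * tp j.
Proof.
apply: funext=> n; rewrite tpowM_coef /tp /tpow; case: leqP=> h.
  by congr (if _ then _ else _); apply/eqP/eqP; lia.
by rewrite ifN //; apply/eqP; lia.
Qed.

Lemma tpow_hv j : hv j (tp j).
Proof. by move=> i hi; rewrite /tp /tpow ifN // neq_ltn hi. Qed.
Lemma tpow_val j : is_val (tp j) j.
Proof. by split; [rewrite /tp /tpow eqxx; apply/eqP; apply: oner_neq0 | exact: tpow_hv]. Qed.

Definition shiftL j f : psr k := fun n => f (n + j)%N.
Lemma shiftL_eq j f : hv j f -> f = tp j * shiftL j f.
Proof.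
move=> hf; apply: funext=> n; rewrite tpowM_coef /shiftL; case: leqP=> h.
  by rewrite subnK.
by rewrite hf.
Qed.
Lemma shiftL_hv j N f : hv (N + j) f -> hv N (shiftL j f).
Proof. by move=> hf i hi; rewrite /shiftL hf // ltn_add2r. Qed.

Lemma ps_powE f e : ps_pow f e = f ^+ e.
Proof. by elim: e => [|e IH] //=; rewrite exprS -IH. Qed.

Lemma monoE (x : seq (ps k)) (al : {ffun 'I_(size x) -> nat}) :
  @mono k x al = \prod_(i < size x) ((nth (ps0 k) x i : psr k) ^+ al i).
Proof.
rewrite /mono -big_enum /=.
elim: (enum _) => [|i r IH]; first by rewrite big_nil.
by rewrite big_cons /= -IH mulE ps_powE.
Qed.

End Basics.

Section Closure.
Context {k : fieldType} (T : pset k) (Tsub : subalg T).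

Lemma T_const c : T (pc c). Proof. by case: Tsub. Qed.
Lemma T_add (f g : psr k) : T f -> T g -> T (f + g). Proof. by case: Tsub=> _ [H _]; apply: H. Qed.
Lemma T_mul (f g : psr k) : T f -> T g -> T (f * g). Proof. by case: Tsub=> _ [_ H]; apply: H. Qed.
Lemma T_one : T (1 : psr k). Proof. exact: (T_const 1). Qed.
Lemma T_zero : T (0 : psr k). Proof. by rewrite -const0; apply: T_const. Qed.
Lemma T_opp (f : psr k) : T f -> T (- f).
Proof.
move=> hf; have -> : - f = pc (-1) * f.
  by apply: funext=> n; rewrite constM cN mulN1r.
by apply: T_mul=> //; apply: T_const.
Qed.
Lemma T_sub (f g : psr k) : T f -> T g -> T (f - g).
Proof. by move=> hf hg; apply: T_add=> //; apply: T_opp. Qed.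
Lemma T_sum (I : Type) (r : seq I) (P : pred I) (F : I -> psr k) :
  (forall i, P i -> T (F i)) -> T (\sum_(i <- r | P i) F i).
Proof. by move=> H; elim/big_rec: _ => [|i y Pi hy]; [apply: T_zero | apply: T_add=> //; apply: H]. Qed.
Lemma T_prod (I : Type) (r : seq I) (F : I -> psr k) :
  (forall i, T (F i)) -> T (\prod_(i <- r) F i).
Proof. by move=> H; elim/big_rec: _ => [|i y Pi hy]; [apply: T_one | apply: T_mul=> //; apply: H]. Qed.
Lemma T_exp (f : psr k) e : T f -> T (f ^+ e).
Proof. by move=> hf; elim: e => [|e IH]; [apply: T_one | rewrite exprS; apply: T_mul]. Qed.

Lemma maxid_scale c (f : psr k) : maxid T f -> maxid T (pc c * f).
Proof. by case=> hf h0; split; [apply: T_mul=> //; apply: T_const | rewrite constM h0 mulr0]. Qed.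
Lemma maxid_add (f g : psr k) : maxid T f -> maxid T g -> maxid T (f + g).
Proof. by case=> hf h0 [hg h1]; split; [apply: T_add | rewrite cD h0 h1 addr0]. Qed.
Lemma maxid_sub (f g : psr k) : maxid T f -> maxid T g -> maxid T (f - g).
Proof. by case=> hf h0 [hg h1]; split; [apply: T_sub | rewrite cB h0 h1 subr0]. Qed.
Lemma maxid_mul (f g : psr k) : maxid T f -> T g -> maxid T (f * g).
Proof.
case=> hf h0 hg; split; first by apply: T_mul.
by rewrite cM big_ord1 h0 mul0r.
Qed.

End Closure.

Section Idsq.
Context {k : fieldType}.

Lemma idsqE (I : pset k) (f : psr k) : idsq I f <->
  exists l : seq (ps k * ps k),
    (forall j, (j < size l)%N -> I (nth (ps0 k, ps0 k) l j).1 /\ I (nth (ps0 k, ps0 k) l j).2) /\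
    f = \sum_(p <- l) ((p.1 : psr k) * p.2).
Proof.
split=> [[l [h1 h2]]|[l [h1 h2]]]; exists l; split=> //.
  by apply: funext=> n; rewrite h2 c_sum.
by move=> n; rewrite h2 c_sum.
Qed.

Lemma idsq0 (I : pset k) : idsq I (0 : psr k).
Proof. by apply/idsqE; exists [::]; split=> //; rewrite big_nil. Qed.

Lemma idsq_add (I : pset k) (f g : psr k) : idsq I f -> idsq I g -> idsq I (f + g).
Proof.
move=> /idsqE [l1 [h1 e1]] /idsqE [l2 [h2 e2]]; apply/idsqE; exists (l1 ++ l2); split.
  move=> j; rewrite size_cat nth_cat=> hj; case: (ltnP j (size l1))=> hj'.
    exact: h1.
  apply: h2; lia.
by rewrite big_cat e1 e2.
Qed.

Lemma idsq_pair (I : pset k) (f g : psr k) : I f -> I g -> idsq I (f * g).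
Proof.
move=> hf hg; apply/idsqE; exists [:: (f : ps k, g : ps k)]; split.
  by move=> [|j] //.
by rewrite big_seq1.
Qed.

Lemma idsq_scale (I : pset k) c (f : psr k) :
  (forall g : psr k, I g -> I (pc c * g)) -> idsq I f -> idsq I (pc c * f).
Proof.
move=> hI /idsqE [l [h1 e1]]; apply/idsqE.
exists [seq ((pc c * (p.1 : psr k)) : ps k, p.2) | p <- l]; split.
  move=> j; rewrite size_map=> hj; rewrite (nth_map (ps0 k, ps0 k)) //=.
  by case: (h1 j hj)=> ha hb; split=> //; apply: hI.
by rewrite big_map e1 mulr_sumr; apply: eq_bigr=> p _; rewrite mulrA.
Qed.

Lemma idsq_maxid (T : pset k) (Tsub : subalg T) (f : psr k) :
  idsq (maxid T) f -> maxid T f.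
Proof.
move=> /idsqE [l [h1 ->]]; elim: l h1 => [|p l IH] h1.
  by rewrite big_nil; split; [apply: T_zero | ].
rewrite big_cons; apply: maxid_add=> //.
  by case: (h1 0%N)=> // ha [hb _]; apply: maxid_mul.
by apply: IH=> j hj; apply: (h1 j.+1).
Qed.

End Idsq.

Section Gen.
Context {k : fieldType} (T : pset k) (xs : seq (ps k)) (ts : seq nat) (cc c0 : nat).
Hypothesis Tsub : subalg T.
Hypothesis Hgen : HKgens T ts xs.
Hypothesis Hseq : forall n, n \in ts <-> (vset (maxid T) n /\ ~ vset (idsq (maxid T)) n).
Hypothesis Hcc : forall f : psr k, hv cc f -> idsq (maxid T) f.
Hypothesis c0pos : (0 < c0)%N.
Hypothesis Hc0 : forall f : psr k, hv c0 f -> T f.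

Local Notation m := (size xs).
Implicit Types (al be : {ffun 'I_m -> nat}).
Definition X (i : 'I_m) : psr k := nth (ps0 k) xs i.
Definition Mo (al : {ffun 'I_m -> nat}) : psr k := @mono k xs al.
Definition deg (al : {ffun 'I_m -> nat}) : nat := (\sum_i al i)%N.
Definition ev (P : seq (k * {ffun 'I_m -> nat})) : psr k := \sum_(p <- P) pc p.1 * Mo p.2.
Definition degge d (P : seq (k * {ffun 'I_m -> nat})) := forall p, p \in P -> (d <= deg p.2)%N.
Definition approx N d (g : psr k) := exists P, degge d P /\ hv N (g - ev P).

Lemma size_eq : m = size ts. Proof. by case: Hgen. Qed.

Lemma ts_pos j : (j < size ts)%N -> (0 < nth 0%N ts j)%N.
Proof.
move=> hj; have /Hseq [[f [[_ f0] [fv _]]] _] := mem_nth 0%N hj.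
by rewrite lt0n; apply/eqP=> h; rewrite h in fv.
Qed.

Lemma X_T i : T (X i). Proof. by case: Hgen=> e H; case: (H i); rewrite -?size_eq. Qed.
Lemma X_val i : is_val (X i) (nth 0%N ts i). Proof. by case: Hgen=> e H; case: (H i); rewrite -?size_eq. Qed.
Lemma X_hv1 i : hv 1 (X i).
Proof.
apply: hvW (is_val_hv (X_val i)); apply: ts_pos; rewrite -size_eq; exact: ltn_ord.
Qed.

Lemma MoE al : Mo al = \prod_(i < m) X i ^+ al i. Proof. by rewrite /Mo monoE. Qed.
Lemma Mo_T al : T (Mo al). Proof. by rewrite MoE; apply: T_prod=> // i; apply: T_exp=> //; apply: X_T. Qed.
Lemma Mo_hv al : hv (deg al) (Mo al).
Proof.
rewrite MoE /deg; have := @hv_prod k _ (index_enum 'I_m) (fun i => X i ^+ al i) (fun i => 1 * al i)%N.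
rewrite (eq_bigr (fun i => al i)) => [|i _]; last by rewrite mul1n.
by apply=> i; apply: hvX; apply: X_hv1.
Qed.
Definition fadd al be : {ffun 'I_m -> nat} := [ffun i => al i + be i]%N.
Lemma Mo_add al be : Mo (fadd al be) = Mo al * Mo be.
Proof. by rewrite !MoE -big_split /=; apply: eq_bigr=> i _; rewrite ffunE exprD. Qed.
Lemma deg_add al be : deg (fadd al be) = (deg al + deg be)%N.
Proof. by rewrite /deg -big_split /=; apply: eq_bigr=> i _; rewrite ffunE. Qed.
Lemma Mo0 : Mo [ffun _ => 0%N] = 1.
Proof. by rewrite MoE big1 // => i _; rewrite ffunE expr0. Qed.
Lemma deg0 : deg [ffun _ => 0%N] = 0%N.
Proof. by rewrite /deg big1 // => i _; rewrite ffunE. Qed.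
Lemma Mo_delta j : Mo [ffun i => (i == j) : nat] = X j.
Proof.
rewrite MoE (bigD1 j) //= ffunE eqxx expr1 big1 ?mulr1 // => i hi.
by rewrite ffunE (negbTE hi) expr0.
Qed.
Lemma deg_delta j : deg [ffun i => (i == j) : nat] = 1%N.
Proof.
rewrite /deg (bigD1 j) //= ffunE eqxx big1 ?addn0 // => i hi.
by rewrite ffunE (negbTE hi).
Qed.

Lemma ev_nil : ev [::] = 0. Proof. by rewrite /ev big_nil. Qed.
Lemma ev_cons p P : ev (p :: P) = pc p.1 * Mo p.2 + ev P. Proof. by rewrite /ev big_cons. Qed.
Lemma ev_cat P Q : ev (P ++ Q) = ev P + ev Q. Proof. by rewrite /ev big_cat. Qed.
Lemma ev_T P : T (ev P).
Proof. by apply: T_sum=> // p _; apply: T_mul=> //; [apply: T_const | apply: Mo_T]. Qed.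
Lemma ev_hv d P : degge d P -> hv d (ev P).
Proof.
move=> hP; rewrite /ev big_seq_cond; apply: hv_sum=> p /andP [hp _].
by apply: hvMl; apply: (@hvW _ d (deg p.2)); [apply: hP | apply: Mo_hv].
Qed.

Definition pmul (P Q : seq (k * {ffun 'I_m -> nat})) :=
  [seq (p.1 * q.1, fadd p.2 q.2) | p <- P, q <- Q].
Lemma ev_mul P Q : ev (pmul P Q) = ev P * ev Q.
Proof.
rewrite /ev /pmul big_allpairs_dep mulr_suml; apply: eq_bigr=> p _.
rewrite mulr_sumr; apply: eq_bigr=> q _ /=.
rewrite Mo_add constMM.
by rewrite -!mulrA; congr (_ * _); rewrite mulrCA.
Qed.
Lemma degge_mul d1 d2 P Q : degge d1 P -> degge d2 Q -> degge (d1 + d2) (pmul P Q).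
Proof.
move=> hP hQ r /allpairsP [[p q] [hp hq ->]] /=.
by rewrite deg_add leq_add //; [apply: hP | apply: hQ].
Qed.

Lemma degge_nil d : degge d [::]. Proof. by []. Qed.
Lemma degge_cat d P Q : degge d P -> degge d Q -> degge d (P ++ Q).
Proof. by move=> hP hQ p; rewrite mem_cat; case/orP; [apply: hP | apply: hQ]. Qed.
Lemma degge_W d d' P : (d' <= d)%N -> degge d P -> degge d' P.
Proof. by move=> h hP p hp; apply: leq_trans h (hP p hp). Qed.

Lemma approx_add N d g1 g2 : approx N d g1 -> approx N d g2 -> approx N d (g1 + g2).
Proof.
move=> [P1 [h1 e1]] [P2 [h2 e2]]; exists (P1 ++ P2); split; first by apply: degge_cat.
rewrite ev_cat; have -> : g1 + g2 - (ev P1 + ev P2) = (g1 - ev P1) + (g2 - ev P2) by rewrite opprD addrACA.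
by apply: hvD.
Qed.
Lemma approx_W N d d' g : (d' <= d)%N -> approx N d g -> approx N d' g.
Proof. by move=> h [P [h1 e1]]; exists P; split=> //; apply: degge_W h h1. Qed.
Lemma approx_exact N d P : degge d P -> approx N d (ev P).
Proof. by move=> h; exists P; split=> //; rewrite subrr. Qed.
Lemma approx_mul N d1 d2 g1 g2 : approx N d1 g1 -> approx N d2 g2 -> approx N (d1 + d2) (g1 * g2).
Proof.
move=> [P1 [h1 e1]] [P2 [h2 e2]]; exists (pmul P1 P2); split; first by apply: degge_mul.
rewrite ev_mul.
have -> : g1 * g2 - ev P1 * ev P2 = (g1 - ev P1) * g2 + ev P1 * (g2 - ev P2).
  by rewrite mulrBl mulrBr addrA subrK.
by apply: hvD; [apply: hvMr | apply: hvMl].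
Qed.
Lemma approx_mul1 N d1 d2 g1 g2 : (0 < d1)%N -> hv 1 g2 ->
  approx N d1 g1 -> approx N d2 g2 -> approx N.+1 (d1 + d2) (g1 * g2).
Proof.
move=> d1p hg2 [P1 [h1 e1]] [P2 [h2 e2]]; exists (pmul P1 P2); split; first by apply: degge_mul.
rewrite ev_mul.
have -> : g1 * g2 - ev P1 * ev P2 = (g1 - ev P1) * g2 + ev P1 * (g2 - ev P2).
  by rewrite mulrBl mulrBr addrA subrK.
apply: hvD; first by rewrite -addn1; apply: hvM.
rewrite -add1n; apply: hvM=> //; exact: (@hvW _ 1 d1 _ d1p (ev_hv h1)).
Qed.

Lemma base g : maxid T g -> exists P (h : psr k), degge 1 P /\ idsq (maxid T) h /\ g = ev P + h.
Proof.
move=> Hg0.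
suff H : forall d (g : psr k), maxid T g -> hv (cc - d) g ->
    exists P (h : psr k), degge 1 P /\ idsq (maxid T) h /\ g = ev P + h.
  by apply: (H cc) => //; rewrite subnn.
elim=> [|d IH] {Hg0}g Hg hg.
  exists [::], g; split => //; split; last by rewrite ev_nil add0r.
  by apply: Hcc; rewrite subn0 in hg.
case: (hv_or_val g (cc - d)) => [hg'|[v hv1 hv2]]; first exact: IH.
have gv : g v <> 0 by case: hv2.
have hvv : v = (cc - d.+1)%N.
  apply/eqP; rewrite eqn_leq; apply/andP; split; first by lia.
  rewrite leqNgt; apply/negP=> hlt; apply: gv; exact: hg.
have red : forall y : psr k, maxid T y -> is_val y v ->
    maxid T (g - pc (g v / y v) * y) /\ hv (cc - d) (g - pc (g v / y v) * y).
  move=> y Hy [ynz yhv]; split; first by apply: maxid_sub => //; apply: maxid_scale.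
  move=> i hi; rewrite cB constM; case: (ltngtP i v) => hiv.
  - by rewrite (is_val_hv hv2 hiv) (yhv _ hiv) mulr0 subr0.
  - exfalso; lia.
  - by rewrite hiv divfK ?subrr //; apply/eqP.
case: (pselect (vset (idsq (maxid T)) v)) => [[h' [Hh' vh']] | nv].
  have [Hm hh] := red h' (idsq_maxid Tsub Hh') vh'.
  have [P [h [dP [Hh e]]]] := IH _ Hm hh.
  exists P, (h + pc (g v / h' v) * h'); split => //; split.
    by apply: idsq_add => //; apply: idsq_scale => // y; apply: maxid_scale.
  by rewrite addrA -e subrK.
have vts : v \in ts by apply/Hseq; split => //; exists g; split.
have hj : (index v ts < m)%N by rewrite size_eq index_mem.
pose j := Ordinal hj.
have Xj : is_val (X j) v by have := X_val j; rewrite /= nth_index.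
have XT : maxid T (X j) by split; [apply: X_T | apply: X_hv1].
have [Hm hh] := red (X j) XT Xj.
have [P [h [dP [Hh e]]]] := IH _ Hm hh.
exists ((g v / X j v, [ffun i => (i == j) : nat]) :: P), h; split.
  move=> p; rewrite in_cons => /orP [/eqP -> | hp]; [by rewrite deg_delta | exact: dP].
split => //; rewrite ev_cons Mo_delta /= -addrA -e.
by rewrite addrC subrK.
Qed.

Lemma hv1_maxid (g : psr k) : maxid T g -> hv 1 g.
Proof. by case=> _ h0 i; rewrite ltnS leqn0 => /eqP ->. Qed.

Lemma approxQ N : forall g, maxid T g -> approx N 1 g.
Proof.
elim: N => [|N IH] g Hg.
  by exists [::]; split => //; apply: hv0.
have [P [h [dP [Hh ->]]]] := base Hg.
apply: approx_add; first exact: approx_exact.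
move: Hh => /idsqE [l [hl ->]].
elim: l hl => [|p l IHl] hl.
  by rewrite big_nil; exists [::]; split=> //; rewrite ev_nil subr0; apply: hvz.
rewrite big_cons; apply: approx_add.
  case: (hl 0%N) => //= h1 h2.
  apply: (approx_W (isT : (1 <= 2)%N)).
  apply: (@approx_mul1 N 1 1) => //; [exact: hv1_maxid | exact: IH | exact: IH].
by apply: IHl => j hj; exact: (hl j.+1).
Qed.

Lemma approxT N (f : psr k) : T f -> approx N 0 f.
Proof.
move=> hf; have -> : f = pc (f 0%N) + (f - pc (f 0%N)) by rewrite addrC subrK.
apply: approx_add.
  have := @approx_exact N 0 [:: (f 0%N, [ffun _ => 0%N])] (fun _ _ => leq0n _).
  by rewrite ev_cons ev_nil addr0 Mo0 mulr1.
apply: (approx_W (isT : (0 <= 1)%N)); apply: approxQ; split.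
  by apply: T_sub => //; apply: T_const.
by rewrite cB /pc /ps_const eqxx subrr.
Qed.

Lemma approxA N d : (0 < d)%N -> forall g : psr k, hv (d * c0) g -> approx N d g.
Proof.
elim: d => [//|d IH] _ g hg.
case: (posnP d) => [d0|dpos].
  rewrite d0 mul1n in hg *; apply: approxQ; split; first exact: Hc0.
  by apply: hg.
have hgc : hv c0 g by apply: hvW hg; rewrite mulSn leq_addr.
rewrite (shiftL_eq hgc) -add1n; apply: approx_mul.
  apply: approxQ; split; first by apply: Hc0; apply: tpow_hv.
  by apply: tpow_hv.
apply: IH => //; apply: shiftL_hv; by rewrite addnC -mulSn.
Qed.

Definition emb B (al : {ffun 'I_m -> 'I_B}) : {ffun 'I_m -> nat} := [ffun i => nat_of_ord (al i)].

Lemma emb_inj B : injective (@emb B).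
Proof.
move=> a1 a2 e; apply/ffunP=> i; apply: val_inj.
by have := congr1 (fun f : {ffun 'I_m -> nat} => f i) e; rewrite /emb !ffunE.
Qed.

Lemma pick B be (Y : k) :
  \sum_(al : {ffun 'I_m -> 'I_B.+1}) (if be == emb al then Y else 0) =
  if [forall i, be i < B.+1]%N then Y else 0.
Proof.
case: (boolP [forall i, be i < B.+1]%N) => hb.
  pose al0 : {ffun 'I_m -> 'I_B.+1} := [ffun i => inord (be i)].
  have e0 : emb al0 = be.
    apply/ffunP=> i; rewrite /emb !ffunE inordK //; exact: (forallP hb i).
  rewrite -big_mkcond (big_pred1 al0) // => al /=.
  apply/eqP/eqP=> [h|->]; last by rewrite e0.
  by apply: emb_inj; rewrite e0.
apply: big1 => al _; case: eqP => // e; case/negP: hb; apply/forallP=> i.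
by rewrite e /emb ffunE.
Qed.

Lemma deg_ge al i : (al i <= deg al)%N.
Proof. by rewrite /deg (bigD1 i) //= leq_addr. Qed.

Lemma Mo_out be N : ~~ [forall i, be i < N.+1]%N -> Mo be N = 0.
Proof.
move=> /forallPn [i hi]; apply: Mo_hv; move: hi; rewrite ltnS -ltnNge => hi.
exact: leq_trans hi (deg_ge be i).
Qed.

Definition coef (P : seq (k * {ffun 'I_m -> nat})) be := \sum_(p <- P | p.2 == be) p.1.

Lemma evN P N : ev P N = \sum_(p <- P) p.1 * Mo p.2 N.
Proof. by rewrite /ev c_sum; apply: eq_bigr=> p _; rewrite constM. Qed.

Lemma ev_box P N :
  ev P N = \sum_(al : {ffun 'I_m -> 'I_N.+1}) coef P (emb al) * Mo (emb al) N.
Proof.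
rewrite evN.
transitivity (\sum_(p <- P) \sum_(al : {ffun 'I_m -> 'I_N.+1})
    (if p.2 == emb al then p.1 * Mo p.2 N else 0)).
  apply: eq_bigr=> p _; rewrite pick; case: ifP=> // hb.
  by rewrite Mo_out ?hb // mulr0.
rewrite exchange_big /=; apply: eq_bigr=> al _.
rewrite /coef mulr_suml [RHS]big_mkcond /=; apply: eq_bigr=> p _.
by case: (eqVneq p.2 (emb al)) => [->|].
Qed.

Lemma box_change B N (G : {ffun 'I_m -> nat} -> k) : (N <= B)%N ->
  (forall be, G be != 0 -> forall i, (be i <= N)%N) ->
  \sum_(al : {ffun 'I_m -> 'I_B.+1}) G (emb al) = \sum_(al : {ffun 'I_m -> 'I_N.+1}) G (emb al).
Proof.
move=> hNB hG.
transitivity (\sum_(al : {ffun 'I_m -> 'I_B.+1}) \sum_(al' : {ffun 'I_m -> 'I_N.+1})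
    (if emb al == emb al' then G (emb al) else 0)).
  apply: eq_bigr=> al _; rewrite pick; case: ifP=> // hb.
  case: (eqVneq (G (emb al)) 0) => // h; case/negP: hb; apply/forallP=> i.
  by rewrite ltnS; apply: hG.
rewrite exchange_big /=; apply: eq_bigr=> al' _.
transitivity (\sum_(al : {ffun 'I_m -> 'I_B.+1}) (if emb al' == emb al then G (emb al') else 0)).
  by apply: eq_bigr=> al _; rewrite eq_sym; case: eqP=> [->|].
rewrite pick ifT //; apply/forallP=> i; rewrite /emb ffunE.
by apply: leq_trans (ltn_ord (al' i)) _; rewrite ltnS.
Qed.

Lemma image_T (f : psr k) : in_ps_image xs f -> T f.
Proof.
case=> _ [c hc].
have [c0' e0] : exists c0', c0 = c0'.+1 by exists c0.-1; rewrite prednK.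
pose Q := \sum_(al : {ffun 'I_m -> 'I_c0'.+1}) pc (c (emb al)) * Mo (emb al).
have QT : T Q by apply: (T_sum Tsub)=> al _; apply: (T_mul Tsub); [apply: (T_const Tsub) | apply: Mo_T].
have -> : f = Q + (f - Q) by rewrite addrC subrK.
have hc' : forall N, f N = \sum_(al : {ffun 'I_m -> 'I_N.+1}) c (emb al) * Mo (emb al) N.
  exact: hc.
have hQ : forall N, Q N = \sum_(al : {ffun 'I_m -> 'I_c0'.+1}) c (emb al) * Mo (emb al) N.
  by move=> N; rewrite /Q c_sum; apply: eq_bigr=> al _; rewrite constM.
apply: (T_add Tsub)=> //; apply: Hc0=> N hN; rewrite cB hc' hQ.
rewrite (@box_change c0' N (fun be => c be * Mo be N)) ?subrr //.
  by rewrite -ltnS -e0.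
move=> be hbe i; case: (boolP [forall i, be i < N.+1]%N) => [/forallP /(_ i)|hb] //.
by rewrite Mo_out ?mulr0 ?eqxx in hbe.
Qed.

Section Construct.
Variable f : psr k.
Hypothesis hf : T f.

Lemma step N (P : seq (k * {ffun 'I_m -> nat})) : exists Q,
  hv N (f - ev P) -> degge (N %/ c0) Q /\ hv N.+1 (f - ev P - ev Q).
Proof.
case: (pselect (hv N (f - ev P))) => hN; last by exists [::].
have TP : T (f - ev P) by apply: (T_sub Tsub)=> //; apply: ev_T.
case: (posnP (N %/ c0)) => [z|p].
  have [Q [dQ hQ]] := approxT N.+1 TP.
  by exists Q => _; rewrite z; split.
have [Q [dQ hQ]] := approxA N.+1 p (hvW (leq_trunc_div N c0) hN).
by exists Q.
Qed.

Definition stepf N P := proj1_sig (cid (step N P)).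

Fixpoint Pseq N := match N with 0 => [::] | N'.+1 => Pseq N' ++ stepf N' (Pseq N') end.

Lemma Pseq_hv N : hv N (f - ev (Pseq N)).
Proof.
elim: N => [|N IH] /=; first exact: hv0.
move: IH; rewrite /stepf; case: (cid (step N (Pseq N))) => Q /= H hN.
by case: (H hN) => _ h; rewrite ev_cat opprD addrA.
Qed.

Lemma Pseq_deg N : degge (N %/ c0) (stepf N (Pseq N)).
Proof.
have := @Pseq_hv N; rewrite /stepf; case: (cid (step N (Pseq N))) => Q /= H hN.
by case: (H hN).
Qed.

Lemma coef_cat P Q be : coef (P ++ Q) be = coef P be + coef Q be.
Proof. by rewrite /coef big_cat. Qed.

Lemma coef_deg d Q be : degge d Q -> (deg be < d)%N -> coef Q be = 0.
Proof.
move=> hQ hd; rewrite /coef big_seq_cond big1 // => p /andP [hp /eqP e].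
by have := hQ p hp; rewrite e leqNgt hd.
Qed.

Definition cf be := coef (Pseq ((deg be).+1 * c0)) be.

Lemma coef_stable be N : ((deg be).+1 * c0 <= N)%N -> coef (Pseq N) be = cf be.
Proof.
move=> hN; rewrite -(subnKC hN); rewrite /cf.
elim: (N - _)%N => [|d IH]; first by rewrite addn0.
rewrite addnS /= coef_cat IH.
rewrite [coef (stepf _ _) be](@coef_deg (((deg be).+1 * c0 + d) %/ c0)) ?addr0 //.
  exact: Pseq_deg.
apply: leq_trans (leq_div2r c0 (leq_addr d _)); by rewrite mulnK.
Qed.

Lemma T_image : in_ps_image xs f.
Proof.
split.
  move=> i hi; exact: (X_hv1 (Ordinal hi)).
exists cf => N.
pose M := ((N.+1 * c0) + N.+1)%N.
have hM := @Pseq_hv M.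
have -> : f N = ev (Pseq M) N.
  apply/eqP; rewrite -subr_eq0; apply/eqP; rewrite -cB; apply: hM.
  by rewrite /M ltn_addl.
rewrite ev_box; apply: eq_bigr=> al _.
change (coef (Pseq M) (emb al) * Mo (emb al) N = cf (emb al) * Mo (emb al) N).
case: (leqP (deg (emb al)) N) => hd.
  rewrite coef_stable //; apply: leq_trans (leq_addr _ _).
  by rewrite leq_mul2r ltnS hd orbT.
by rewrite (@Mo_hv (emb al) N hd) !mulr0.
Qed.

End Construct.

End Gen.

Lemma sorted_head_min (s : seq nat) y : sorted ltn s -> y \in s -> (nth 0%N s 0 <= y)%N.
Proof.
case: s => [//|z s] /= hp; rewrite in_cons => /orP [/eqP ->//|hy].
have /allP := order_path_min ltn_trans hp.
by move=> /(_ y hy) /ltnW.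
Qed.

Lemma sorted_cat_lt (s1 s2 : seq nat) : sorted ltn s1 -> sorted ltn s2 ->
  (forall u w, u \in s1 -> w \in s2 -> (u < w)%N) -> sorted ltn (s1 ++ s2).
Proof.
case: s1 => [|z s1] /=; first by move=> _ h2.
move=> hp h2 H; rewrite cat_path hp /=.
case: s2 h2 H => [//|w s2] /= -> H; rewrite andbT.
apply: H; [exact: mem_last | exact: mem_head].
Qed.

Lemma idsq_mono {k : fieldType} (I J : pset k) f : (forall g, I g -> J g) -> idsq I f -> idsq J f.
Proof.
move=> hIJ [l [h1 h2]]; exists l; split=> // j hj.
by case: (h1 j hj)=> ha hb; split; apply: hIJ.
Qed.

Lemma idsq_hv {k : fieldType} (I : pset k) M (f : psr k) :
  (forall g : psr k, I g -> hv M g) -> idsq I f -> hv (M + M) f.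
Proof.
move=> hI /idsqE [l [hl ->]]; elim: l hl => [|p l IH] hl.
  by rewrite big_nil; apply: hvz.
rewrite big_cons; apply: hvD; last by apply: IH => j hj; exact: (hl j.+1).
by case: (hl 0%N) => // h1 h2; apply: hvM; apply: hI.
Qed.

Section Main.
Context (k : fieldType) (R : pset k) (cR : nat) (a : seq nat) (x : seq (ps k)) (b : seq nat).
Hypothesis HR : subalg R.
Hypothesis HC : forall f, conductor R f <-> (forall i, (i < cR)%N -> f i = 0).
Hypothesis HKa : HKseq R a.
Hypothesis HKx : HKgens R a x.
Hypothesis Hx0 : forall n, nth (ps0 k) x 0 n = tpow k (nth 0%N a 0) n.
Hypothesis Hm2 : forall f, conductor R f -> idsq (maxid R) f.
Hypothesis Hb : sorted ltn b.
Hypothesis Hbm : forall m, m \in b <->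
     ((cR - nth 0%N a 0 <= m)%N /\ (m <= cR - 1)%N /\ ~ vset R m).

Local Notation a1 := (nth 0%N a 0).
Local Notation cS := (cR - a1)%N.
Local Notation S := (adjoin R (divset (conductor R) (nth (ps0 k) x 0))).

Lemma x0E : (nth (ps0 k) x 0 : psr k) = tp a1.
Proof. by apply: funext=> n; rewrite Hx0. Qed.

Lemma Hcond (f : psr k) : hv cR f -> conductor R f.
Proof. by move=> h; apply/HC. Qed.

Lemma a_nonempty : (0 < size a)%N.
Proof.
rewrite lt0n; apply/negP => /eqP a0.
case: HKx => e _.
have ea : a = [::] by apply: size0nil.
have ex : x = [::] by apply: size0nil; rewrite e.
have := Hx0 0%N; rewrite ex ea /= /ps0 /tpow /=.
by move=> /eqP; rewrite eq_sym oner_eq0.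
Qed.

Lemma a1_in : a1 \in a.
Proof. by apply: mem_nth; apply: a_nonempty. Qed.

Lemma a_val y : y \in a -> vset (maxid R) y.
Proof. by case: HKa => _ H /H []. Qed.

Lemma pos_of_maxid y : vset (maxid R) y -> (0 < y)%N.
Proof.
by move=> [f [[_ f0] [fv _]]]; rewrite lt0n; apply/eqP=> e; rewrite e in fv.
Qed.

Lemma a1_pos : (0 < a1)%N.
Proof. exact: pos_of_maxid (a_val a1_in). Qed.

Lemma maxid_hv (f : psr k) : maxid R f -> hv a1 f.
Proof.
suff H : forall v, (exists f : psr k, maxid R f /\ is_val f v) -> (a1 <= v)%N.
  move=> hf; case: (hv_or_val f a1) => // [[v hv1 hv2]].
  by have := H v (ex_intro _ f (conj hf hv2)); rewrite leqNgt hv1.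
move=> {f}; elim/ltn_ind=> v IH [f [hf hfv]].
rewrite leqNgt; apply/negP=> hlt.
have vpos : (0 < v)%N by apply: pos_of_maxid; exists f.
have allhv : forall g : psr k, maxid R g -> hv v g.
  move=> g hg; case: (hv_or_val g v) => // [[w hw1 hw2]].
  have := IH w hw1 (ex_intro _ g (conj hg hw2)) => h.
  by exfalso; lia.
have vin : v \in a.
  case: HKa => _ H; apply/H; split; first by exists f.
  move=> [g [hg hgv]]; have := idsq_hv allhv hg => hh.
  by case: hgv => gv _; apply: gv; apply: hh; lia.
by have := sorted_head_min (proj1 HKa) vin; lia.
Qed.

Lemma cR_ge : (a1 + a1 <= cR)%N.
Proof.
have h := idsq_hv maxid_hv (Hm2 (Hcond (@tpow_hv k cR))).
rewrite leqNgt; apply/negP=> hlt; have := h cR hlt.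
by rewrite /tp /tpow eqxx => /eqP; rewrite oner_eq0.
Qed.

Lemma cS_pos : (0 < cS)%N. Proof. have := cR_ge; have := a1_pos; lia. Qed.

Definition RI : pset k := fun f => exists (r g : psr k), R r /\ hv cS g /\ f = r + g.

Lemma divsetE (g : psr k) : divset (conductor R) (nth (ps0 k) x 0) g <-> hv cS g.
Proof.
rewrite /divset; split.
  move=> /HC h j hj; have := h (j + a1)%N; rewrite mulE x0E tpowM_coef ifT; last by lia.
  rewrite addnK; apply; lia.
move=> h; apply/HC=> i hi; rewrite mulE x0E tpowM_coef; case: leqP=> // hai.
apply: h; lia.
Qed.

Lemma RI_subalg : subalg RI.
Proof.
split; [|split].
- by move=> c; exists (pc c), 0; split; [apply: T_const | split; [apply: hvz | rewrite addr0]].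
- move=> f g [r1 [g1 [h1 [h1' ->]]]] [r2 [g2 [h2 [h2' ->]]]].
  exists (r1 + r2), (g1 + g2); split; first by apply: T_add.
  split; first by apply: hvD.
  have e : (r1 + g1) + (r2 + g2) = (r1 + r2) + (g1 + g2) :> psr k by ring.
  exact: e.
- move=> f g [r1 [g1 [h1 [h1' ->]]]] [r2 [g2 [h2 [h2' ->]]]].
  exists (r1 * r2), (r1 * g2 + g1 * r2 + g1 * g2); split; first by apply: T_mul.
  split; last first.
    have e : (r1 + g1) * (r2 + g2) = r1 * r2 + (r1 * g2 + g1 * r2 + g1 * g2) :> psr k by ring.
    exact: e.
  by apply: hvD; [apply: hvD; [apply: hvMl | apply: hvMr] | apply: hvMr].
Qed.

Lemma adjoin_subalg (A : pset k) : subalg (adjoin R A).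
Proof.
split; [|split].
- by move=> c T hT _ _; apply: (T_const hT).
- by move=> f g hf hg T hT h1 h2; apply: (T_add hT); [apply: hf | apply: hg].
- by move=> f g hf hg T hT h1 h2; apply: (T_mul hT); [apply: hf | apply: hg].
Qed.

Lemma SE (f : psr k) : S f <-> RI f.
Proof.
split.
  move=> hf; apply: hf; first exact: RI_subalg.
    by move=> g hg; exists g, 0; split=> //; split; [apply: hvz | rewrite addr0].
  by move=> g /divsetE hg; exists 0, g; split; [apply: (T_zero HR) | split; [|rewrite add0r]].
move=> [r [g [hr [hg ->]]]]; apply: (T_add (adjoin_subalg _)).
  by move=> T _ h1 _; apply: h1.
by move=> T _ _ h2; apply: h2; apply/divsetE.
Qed.

Lemma S_subalg : subalg S. Proof. exact: adjoin_subalg. Qed.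
Lemma R_S (f : psr k) : R f -> S f.
Proof. by move=> h; apply/SE; exists f, 0; split=> //; split; [apply: hvz | rewrite addr0]. Qed.
Lemma hv_S (f : psr k) : hv cS f -> S f.
Proof. by move=> h; apply/SE; exists 0, f; split; [apply: (T_zero HR) | split; [|rewrite add0r]]. Qed.

Lemma maxidSE (f : psr k) : maxid S f <-> exists (r g : psr k), maxid R r /\ hv cS g /\ f = r + g.
Proof.
split.
  move=> [/SE [r [g [hr [hg e]]]] f0]; exists r, g; split; last by split.
  by split=> //; move: f0; rewrite e cD hg ?cS_pos // addr0.
move=> [r [g [[hr r0] [hg ->]]]]; split; first by apply/SE; exists r, g.
by rewrite cD r0 hg ?cS_pos // addr0.
Qed.

Lemma vset_maxidS y : vset (maxid S) y <-> vset (maxid R) y \/ (cS <= y)%N.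
Proof.
split.
  move=> [f [/maxidSE [r [g [hr [hg e]]]] hfv]].
  case: (leqP cS y) => hy; [by right | left].
  exists r; split=> //; case: hfv => fy fh; rewrite e cD hg ?addr0 // in fy; split=> //.
  by move=> i hi; have := fh i hi; rewrite e cD hg ?addr0 //; lia.
case=> [[f [hf hfv]]|hy].
  by exists f; split=> //; apply/maxidSE; exists f, 0; split=> //; split; [apply: hvz|rewrite addr0].
exists (tp y); split; last exact: tpow_val.
apply/maxidSE; exists 0, (tp y); split.
  by split; [apply: (T_zero HR) | ].
by split; [apply: (@hvW _ _ y); [lia | exact: tpow_hv] | rewrite add0r].
Qed.

Lemma idsqSE (f : psr k) : idsq (maxid S) f <-> idsq (maxid R) f.
Proof.
split; last first.
  apply: idsq_mono => g [hg g0]; split=> //; exact: R_S.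
move=> /idsqE [l [hl ->]]; elim: l hl => [|p l IH] hl.
  by rewrite big_nil; apply: idsq0.
rewrite big_cons; apply: idsq_add; last by apply: IH => j hj; exact: (hl j.+1).
case: (hl 0%N) => // /= /maxidSE [r1 [g1 [h1 [h1' e1]]]] /maxidSE [r2 [g2 [h2 [h2' e2]]]].
rewrite e1 e2.
have -> : (r1 + g1) * (r2 + g2) = r1 * r2 + (r1 * g2 + g1 * r2 + g1 * g2) by ring.
apply: idsq_add; first by apply: idsq_pair.
apply: Hm2; apply: Hcond.
have hr1 := maxid_hv h1; have hr2 := maxid_hv h2.
have e : cR = (a1 + cS)%N by have := cR_ge; lia.
apply: hvD; first apply: hvD.
- by rewrite e; apply: hvM.
- by rewrite e addnC; apply: hvM.
- by apply: (@hvW _ _ (cS + cS)); [have := cR_ge; lia | apply: hvM].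
Qed.

Lemma vset_high y : (cR <= y)%N -> vset (idsq (maxid R)) y.
Proof.
move=> hy; exists (tp y); split; last exact: tpow_val.
by apply: Hm2; apply: Hcond; apply: (@hvW _ _ y); [lia | exact: tpow_hv].
Qed.

Lemma vsetR_maxid y : (0 < y)%N -> vset R y -> vset (maxid R) y.
Proof.
move=> hy [f0 [hf [fy fh]]]; exists ((f0 : psr k) - pc (f0 0%N)); split.
  split; first by apply: (T_sub HR) => //; apply: (T_const HR).
  by rewrite cB /pc /ps_const eqxx subrr.
split.
  by rewrite cB /pc /ps_const ifN ?subr0 //; rewrite -lt0n.
move=> i hi; rewrite cB (fh i hi) (fh 0%N hy) /pc /ps_const.
by case: ifP; rewrite subrr.
Qed.

Lemma idsqR_R (f : psr k) : idsq (maxid R) f -> R f.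
Proof. by move=> h; case: (idsq_maxid HR h). Qed.

Lemma HK_S y : (y \in a) || (y \in b) <-> (vset (maxid S) y /\ ~ vset (idsq (maxid S)) y).
Proof.
have idE : vset (idsq (maxid S)) y <-> vset (idsq (maxid R)) y.
  by split=> [[f [hf hv]]|[f [hf hv]]]; exists f; split=> //; apply/idsqSE.
rewrite idE vset_maxidS; split.
  case/orP => [/(proj2 HKa y) [h1 h2] | /Hbm [h1 [h2 h3]]]; first by split=> //; left.
  split; first by right.
  move=> [f [hf hfv]]; apply: h3; exists f; split=> //; exact: idsqR_R.
move=> [[hy|hy] hn]; first by apply/orP; left; apply/(proj2 HKa y).
case: (boolP (y \in a)) => // ya; apply/Hbm; split=> //; split.
  case: (leqP cR y) => h; last by lia.
  by case: hn; apply: vset_high.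
move=> hR; case/negP: ya; apply/(proj2 HKa y); split=> //.
apply: vsetR_maxid => //; apply: leq_trans cS_pos hy.
Qed.

Local Notation i0 := (\max_(i < size a | (nth 0%N a i < cR - nth 0%N a 0)%N) i.+1)%N.

Lemma a_mono i j : (i <= j)%N -> (j < size a)%N -> (nth 0%N a i <= nth 0%N a j)%N.
Proof.
rewrite leq_eqVlt => /orP [/eqP -> //|hij] hj.
apply: ltnW; apply: (sorted_ltn_nth ltn_trans 0%N (proj1 HKa)) => //.
  by rewrite inE (ltn_trans hij hj).
Qed.

Lemma i0_le : (i0 <= size a)%N.
Proof. by apply/bigmax_leqP => i _; apply: ltn_ord. Qed.

Lemma i0_spec i : (i < size a)%N -> (i < i0)%N = (nth 0%N a i < cS)%N.
Proof.
move=> hi; apply/idP/idP => h; last first.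
  by have := @leq_bigmax_cond _ (fun j : 'I_(size a) => nth 0%N a j < cS)%N
     (fun j : 'I_(size a) => j.+1) (Ordinal hi) h.
apply/negP => /negP; rewrite -leqNgt => hc.
have : (i0 <= i)%N.
  apply/bigmax_leqP => j hj; rewrite leqNgt; apply/negP => hij.
  have := a_mono (hij : (i <= j)%N) (ltn_ord j) => hm.
  by move: hj; rewrite ltnNge (leq_trans hc hm).
by rewrite leqNgt h.
Qed.

Lemma take_lt u : u \in take i0 a -> (u < cS)%N.
Proof.
case/(nthP 0%N) => j; rewrite size_take => hj <-.
have hji : (j < i0)%N.
  move: hj; case: (ltnP i0 (size a)) => h hj'; first exact: hj'.
  by apply: leq_trans hj' h.
have hjn : (j < size a)%N by apply: leq_trans hji i0_le.
by rewrite nth_take // -i0_spec.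
Qed.

Lemma drop_ge w : w \in drop i0 a -> (cS <= w)%N.
Proof.
case/(nthP 0%N) => j; rewrite size_drop => hj <-.
rewrite nth_drop; have hn : (i0 + j < size a)%N by rewrite -ltn_subRL.
by rewrite leqNgt -i0_spec //; lia.
Qed.

Lemma b_ge w : w \in b -> (cS <= w)%N.
Proof. by case/Hbm. Qed.

Lemma uniq_db : uniq (drop i0 a ++ b).
Proof.
rewrite cat_uniq; apply/and3P; split.
- apply: drop_uniq; apply: (@sorted_uniq _ ltn ltn_trans ltnn); exact: (proj1 HKa).
- apply/hasPn => y hy; apply/negP => hd.
  have ya : y \in a by rewrite -(cat_take_drop i0 a) mem_cat hd orbT.
  case/Hbm: hy => _ [_ hR]; apply: hR.
  by case: (a_val ya) => f [[hf _] hfv]; exists f.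
- apply: (@sorted_uniq _ ltn ltn_trans ltnn); exact: Hb.
Qed.

Definition ta := take i0 a ++ sort leq (drop i0 a ++ b).

Lemma ta_sorted : sorted ltn ta.
Proof.
apply: sorted_cat_lt.
- exact: take_sorted (proj1 HKa).
- by rewrite ltn_sorted_uniq_leq sort_uniq uniq_db sort_sorted //; apply: leq_total.
- move=> u w hu; rewrite mem_sort mem_cat => hw.
  apply: leq_trans (take_lt hu) _.
  by case/orP: hw; [apply: drop_ge | apply: b_ge].
Qed.

Lemma ta_mem y : (y \in ta) = (y \in a) || (y \in b).
Proof.
by rewrite mem_cat mem_sort mem_cat orbA -mem_cat cat_take_drop.
Qed.

Lemma size_take_i0 : size (take i0 a) = i0.
Proof. by rewrite size_take; case: ltnP => // h; apply/eqP; rewrite eqn_leq h i0_le. Qed.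

Lemma size_ta : size ta = (size a + size b)%N.
Proof.
rewrite size_cat size_sort size_cat size_drop size_take_i0.
by have := i0_le; lia.
Qed.

Lemma take_ta : take i0 ta = take i0 a.
Proof. by rewrite /ta -{1}size_take_i0 take_size_cat. Qed.

Lemma drop_ta : drop i0 ta = sort leq (drop i0 a ++ b).
Proof. by rewrite /ta -{1}size_take_i0 drop_size_cat. Qed.

Lemma HKseq_S : HKseq S ta.
Proof. by split; [exact: ta_sorted | move=> y; rewrite ta_mem; apply: HK_S]. Qed.

Definition xt := [seq (if (j < i0)%N then nth (ps0 k) x j else tpow k (nth 0%N ta j))
                  | j <- iota 0 (size a + size b)].

Lemma HKgens_S : HKgens S ta xt.
Proof.
split; first by rewrite size_map size_iota size_ta.
move=> j; rewrite size_ta => hj.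
rewrite (nth_map 0%N) ?size_iota // nth_iota // add0n.
case: ifP => hji.
  have hjn : (j < size a)%N by apply: leq_trans hji i0_le.
  rewrite /ta nth_cat size_take_i0 hji nth_take //.
  by case: HKx => _ /(_ j hjn) [h1 h2]; split=> //; apply: R_S.
have hm : nth 0%N ta j \in drop i0 ta.
  have -> : j = (i0 + (j - i0))%N by lia.
  rewrite -nth_drop; apply: mem_nth; rewrite size_drop size_ta; lia.
rewrite drop_ta mem_sort mem_cat in hm.
have hc : (cS <= nth 0%N ta j)%N by case/orP: hm; [apply: drop_ge | apply: b_ge].
split; last exact: tpow_val.
by apply: hv_S; apply: (@hvW _ _ (nth 0%N ta j)) => //; exact: tpow_hv.
Qed.

Lemma Hcc_S (f : psr k) : hv cR f -> idsq (maxid S) f.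
Proof. by move=> h; apply/idsqSE; apply: Hm2; apply: Hcond. Qed.

Lemma HKseq_S2 : forall y, y \in ta <-> (vset (maxid S) y /\ ~ vset (idsq (maxid S)) y).
Proof. by case: HKseq_S. Qed.

Lemma main_concl : exists ta : seq nat,
    [/\ HKseq S ta, size ta = (size a + size b)%N,
        take i0 ta = take i0 a,
        drop i0 ta =i drop i0 a ++ b &
        let xt := [seq (if (j < i0)%N then nth (ps0 k) x j else tpow k (nth 0%N ta j))
                  | j <- iota 0 (size a + size b)] in
        HKgens S ta xt /\ (forall f, S f <-> in_ps_image xt f)].
Proof.
exists ta; split.
- exact: HKseq_S.
- exact: size_ta.
- exact: take_ta.
- by move=> y; rewrite drop_ta mem_sort.
- split; first exact: HKgens_S.
  move=> f; split.
    exact: (T_image S_subalg HKgens_S HKseq_S2 Hcc_S cS_pos hv_S).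
  exact: (image_T S_subalg HKgens_S HKseq_S2 cS_pos hv_S).
Qed.

End Main.

Unset Implicit Arguments. Set Strict Implicit.

Theorem mainTheorem11 (k : closedFieldType) (char0 : [pchar k] =i pred0)
  (R : pset k) (cR : nat) (a : seq nat) (x : seq (ps k)) (b : seq nat) :
  (* R is a subring of k[[t]] containing k, with conductor t^cR k[[t]] *)
  subalg R ->
  (forall f, conductor R f <-> (forall i, (i < cR)%N -> f i = 0)) ->
  (* a_1 < ... < a_n is the Herzog--Kunz sequence of R *)
  HKseq R a ->
  (* x_1..x_n are Herzog--Kunz generators of R with x_1 = t^{a_1} *)
  HKgens R a x ->
  (forall n, nth (ps0 k) x 0 n = tpow k (nth 0%N a 0) n) ->
  (* hypothesis C_R in m^2 *)
  (forall f, conductor R f -> idsq (maxid R) f) ->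
  (* b_1 < ... < b_s: elements of [cR - a_1, cR - 1] not in V(R) *)
  sorted ltn b ->
  (forall m, m \in b <->
     ((cR - nth 0%N a 0 <= m)%N /\ (m <= cR - 1)%N /\ ~ vset R m)) ->
  let n := size a in
  let s := size b in
  let S := adjoin R (divset (conductor R) (nth (ps0 k) x 0)) in
  let i0 := (\max_(i < n | (nth 0%N a i < cR - nth 0%N a 0)%N) i.+1)%N in
  exists ta : seq nat,
    [/\ HKseq S ta, size ta = (n + s)%N,
        take i0 ta = take i0 a,
        drop i0 ta =i drop i0 a ++ b &
        let xt := [seq (if (j < i0)%N then nth (ps0 k) x j else tpow k (nth 0%N ta j))
                  | j <- iota 0 (n + s)] in
        HKgens S ta xt /\ (forall f, S f <-> in_ps_image xt f)].
Proof.
move=> HR HC HKa HKx Hx0 Hm2 Hb Hbm.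
exact: (main_concl HR HC HKa HKx Hx0 Hm2 Hb Hbm).
Qed.
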